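(* Let $I=(N,A,V)$ be an instance with three agents $N=\{1,2,3\}$, binary valuations ($V_i(j,a)\in\{0,1\}$) satisfying the no-chore assumption ($V_i(i,a)\ge V_i(j,a)$ for all $i,j,a$). Let $\pi$ be an EF1 complete allocation of $I$ such that for every pair $i,j\in N$, if $\Delta_{ij}(\pi)=-1$ then $\Delta_{ji}(\pi)\ge 0$. Let $a\notin A$ be a new item (with binary, no-chore values $V_i(j,a)$) for which there is an agent $i\in N$ with $\Delta_{ij}(a)=0$ for all $j\in N$. Then the instance $I'=(N,A\cup\{a\},V)$ admits an EF1 complete allocation.
   Context: An allocation $\pi=(\pi_1,\pi_2,\pi_3)$ consists of pairwise disjoint bundles (complete if they cover the item set); $\pi(a)$ is the agent receiving $a$; $V_i(j,a)$ is agent $i$'s value when item $a$ goes to $j$; $V_i(\pi)=\sum_{a\text{ assigned in }\pi}V_i(\pi(a),a)$; $\pi^{i\leftrightarrow j}$ swaps bundles of $i$ and $j$. A complete allocation $\pi$ is EF1 if for all $i,j$ there exist $C$ with $|C|\le1$ and the allocation $\lambda$ with $\lambda_\ell=\pi_\ell\setminus C$ for all $\ell$ such that $V_i(\lambda)\ge V_i(\lambda^{i\leftrightarrow j})$. $\Delta_{ij}(a)=V_i(i,a)-V_i(j,a)$, $\Delta_{ij}(S)=\sum_{a\in S}\Delta_{ij}(a)$ for a set $S$, and $\Delta_{ij}(\pi)=\Delta_{ij}(\pi_i)-\Delta_{ij}(\pi_j)$. *)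

(* Defs.v *)
From mathcomp Require Import all_boot all_order all_algebra.
Set Implicit Arguments. Unset Strict Implicit. Unset Printing Implicit Defensive.
Import Order.TTheory GRing.Theory Num.Theory.

(* Items form a finite type T; an instance has
   item set S : {set T}.  A valuation V i j x is agent i's value when item x
   goes to agent j.  A complete allocation of S is an assignment pi : T -> 'I_3
   (only its values on S matter); bundle pi_l = [set x in S | pi x == l]. *)

Definition valuation (T : finType) := 'I_3 -> 'I_3 -> T -> nat.

Definition Vval (T : finType) (V : valuation T) (i : 'I_3) (S : {set T})
  (pi : T -> 'I_3) : nat := \sum_(x in S) V i (pi x) x.

Definition swapag (i j l : 'I_3) : 'I_3 :=
  if l == i then j else if l == j then i else l.

Definition swap_alloc (T : finType) (pi : T -> 'I_3) (i j : 'I_3) : T -> 'I_3 :=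
  fun x => swapag i j (pi x).

Definition EF1 (T : finType) (V : valuation T) (S : {set T}) (pi : T -> 'I_3) :=
  forall i j : 'I_3, exists C : {set T},
    (#|C| <= 1)%N /\
    (Vval V i (S :\: C) (swap_alloc pi i j) <= Vval V i (S :\: C) pi)%N.

Definition Delta_item (T : finType) (V : valuation T) (i j : 'I_3) (x : T) : int :=
  (V i i x)%:Z - (V i j x)%:Z.

Definition Delta_set (T : finType) (V : valuation T) (i j : 'I_3) (B : {set T}) : int :=
  \sum_(x in B) Delta_item V i j x.

Definition bundle (T : finType) (S : {set T}) (pi : T -> 'I_3) (l : 'I_3) : {set T} :=
  [set x in S | pi x == l].

Definition Delta_alloc (T : finType) (V : valuation T) (S : {set T})
  (pi : T -> 'I_3) (i j : 'I_3) : int :=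
  Delta_set V i j (bundle S pi i) - Delta_set V i j (bundle S pi j).

(* Main.v *)
Require Import Defs.
From mathcomp Require Import all_boot all_order all_algebra.
From mathcomp Require Import zify.
Import Order.TTheory GRing.Theory Num.Theory.
Local Open Scope ring_scope.
Set Implicit Arguments.

Section Aux.
Variables (T : finType) (V : 'I_3 -> 'I_3 -> T -> nat).

Definition hh (pi : T -> 'I_3) (i j : 'I_3) (x : T) : int :=
  (V i (pi x) x)%:Z - (V i (swap_alloc pi i j x) x)%:Z.
Definition HH (S : {set T}) pi i j : int := \sum_(x in S) hh pi i j x.

Lemma Vval_HH (S : {set T}) pi i j :
  (Vval V i S (swap_alloc pi i j) <= Vval V i S pi)%N = (0 <= HH S pi i j).
Proof.
rewrite /HH /hh sumrB subr_ge0 /Vval -lez_nat.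
by rewrite -!natz !natr_sum; congr (_ <= _); apply: eq_bigr => x _; rewrite natz.
Qed.

Lemma HH_diag S pi i : HH S pi i i = 0.
Proof.
rewrite /HH big1 // => x _; rewrite /hh /swap_alloc /swapag.
by case: eqP => [->|]; rewrite subrr.
Qed.

Lemma ef1_pair (S : {set T}) (pi : T -> 'I_3) (i j : 'I_3) (bin : forall i j x, x \in S -> (V i j x <= 1)%N) :
  (exists C : {set T}, (#|C| <= 1)%N /\
    (Vval V i (S :\: C) (swap_alloc pi i j) <= Vval V i (S :\: C) pi)%N)
  <-> -1 <= HH S pi i j.
Proof.
have hlb : forall x, x \in S -> -1 <= hh pi i j x.
  move=> x xS; rewrite /hh; have := bin i (swap_alloc pi i j x) x xS; lia.
split.
- move=> [C [C1]]; rewrite Vval_HH => H0.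
  rewrite /HH (big_setID C) /=.
  have : - (#|S :&: C|%:R) <= \sum_(i0 in S :&: C) hh pi i j i0.
    rewrite -sumr_const -sumrN; apply: ler_sum => x; rewrite inE => /andP[xS _].
    exact: hlb.
  have : (#|S :&: C| <= 1)%N.
    apply: leq_trans C1; apply: subset_leq_card; exact: subsetIr.
  rewrite natz; move: H0; rewrite /HH.
  move: (\sum_(x in S :\: C) hh pi i j x) (\sum_(x in S :&: C) hh pi i j x) (#|S :&: C|) => s1 s2 n h1 hn h2.
  rewrite -[X in X <= _]addr0; apply: lerD h1.
  apply: le_trans h2; by rewrite lerN2 lez_nat.
- move=> Hm.
  case: (boolP (0 <= HH S pi i j)) => [H0|].
    by exists set0; rewrite cards0 setD0 Vval_HH.
  case: (boolP [exists x in S, hh pi i j x < 0]).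
    move/existsP=> [x /andP[xS hx]].
    exists [set x]; rewrite cards1 Vval_HH; split => //.
    move: Hm; rewrite /HH (big_setD1 x xS) /= => Hm.
    have hx1 : hh pi i j x <= -1 by move: hx; lia.
    set s := \sum_(_ in _) _ in Hm *.
    have h2 : hh pi i j x + s <= -1 + s by rewrite lerD2r.
    by have := le_trans Hm h2; rewrite -{1}(addr0 (-1)) lerD2l.
  rewrite negb_exists => /forallP allx; rewrite sumr_ge0 // => x xS.
  by have := allx x; rewrite xS /= -leNgt.
Qed.


Lemma Delta_set_bundle (S : {set T}) pi i j l :
  Delta_set V i j (bundle S pi l) =
  \sum_(x in S) (if pi x == l then Delta_item V i j x else 0).
Proof.
rewrite /Delta_set /bundle big_mkcond [RHS]big_mkcond.
apply: eq_bigr => x _; rewrite inE; by case: (x \in S); case: (pi x == l).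
Qed.

Lemma HH_Delta (S : {set T}) pi (i j : 'I_3) :
  i != j -> HH S pi i j = Delta_alloc V S pi i j.
Proof.
move=> nij; rewrite /Delta_alloc !Delta_set_bundle -sumrB /HH.
apply: eq_bigr => x _; rewrite /hh /swap_alloc /swapag /Delta_item.
case: eqP => [->|ni]; first by rewrite (negbTE nij); lia.
case: eqP => [->|nj]; first by lia.
by rewrite subrr; lia.
Qed.

Definition upd (pi : T -> 'I_3) (a : T) (k : 'I_3) : T -> 'I_3 :=
  fun x => if x == a then k else pi x.

Lemma HH_split (A : {set T}) a pi k i j : a \notin A ->
  HH (a |: A) (upd pi a k) i j = HH A pi i j + hh (upd pi a k) i j a.
Proof.
move=> aA; rewrite /HH big_setU1 //= addrC; congr (_ + _).
apply: eq_bigr => x xA; rewrite /hh /swap_alloc /upd.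
by have -> : (x == a) = false by apply/eqP => e; move: aA; rewrite -e xA.
Qed.

Lemma hh_upd pi a k (i j : 'I_3) : i != j ->
  hh (upd pi a k) i j a =
  if k == i then Delta_item V i j a else if k == j then - Delta_item V i j a else 0.
Proof.
move=> nij; rewrite /hh /upd /swap_alloc eqxx /swapag /Delta_item.
case: eqP => [->|ni]; first by [].
case: eqP => [->|nj]; first by lia.
by lia.
Qed.

End Aux.
Arguments hh {T}.
Arguments HH {T}.
Arguments upd {T}.

Lemma I3_third (x y z w : 'I_3) :
  x != y -> y != z -> x != z -> w != x -> w != z -> w = y.
Proof.
case: x y z w => [x hx] [y hy] [z hz] [w hw].
rewrite -!val_eqE /= => h1 h2 h3 h4 h5; apply: val_inj => /=; lia.
Qed.

Theorem lemma6 (T : finType) (V : 'I_3 -> 'I_3 -> T -> nat)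
  (A : {set T}) (a : T) (pi : T -> 'I_3) :
  a \notin A ->
  (* binary valuations on A ∪ {a} *)
  (forall i j x, x \in a |: A -> (V i j x <= 1)%N) ->
  (* no-chore assumption on A ∪ {a} *)
  (forall i j x, x \in a |: A -> (V i j x <= V i i x)%N) ->
  (* pi is an EF1 complete allocation of I = (N, A, V) *)
  EF1 V A pi ->
  (forall i j : 'I_3, Delta_alloc V A pi i j = (-1)%R ->
     (0 <= Delta_alloc V A pi j i)%R) ->
  (exists i : 'I_3, forall j : 'I_3, Delta_item V i j a = 0%R) ->
  exists pi' : T -> 'I_3, EF1 V (a |: A) pi'.
Proof.
move=> aA bin noch ef1 hyp [i0 hi0].
have binA : forall i j x, x \in A -> (V i j x <= 1)%N.
  by move=> i j x xA; apply: bin; rewrite setU1r.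
have aa : a \in a |: A by rewrite setU11.
have DA : forall i j, -1 <= HH V A pi i j.
  by move=> i j; apply/(@ef1_pair _ V A pi i j binA); apply: ef1.
have d0 : forall i j, 0 <= Delta_item V i j a.
  move=> i j; rewrite /Delta_item subr_ge0 lez_nat; exact: noch.
have d1 : forall i j, Delta_item V i j a <= 1.
  move=> i j; rewrite /Delta_item; have := bin i i a aa; lia.
pose works k := [forall i, forall j, (i != j) ==>
   (-1 <= HH V A pi i j + hh V (upd pi a k) i j a)].
have okW : forall k, works k -> exists pi', EF1 V (a |: A) pi'.
  move=> k /forallP W; exists (upd pi a k) => i j.
  apply/(@ef1_pair _ V (a |: A) (upd pi a k) i j bin).
  case: (eqVneq i j) => [<-|nij]; first by rewrite HH_diag.
  rewrite HH_split //; have := W i => /forallP /(_ j); by rewrite nij.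
have fail : forall k, ~~ works k ->
    exists i, [/\ i != k, HH V A pi i k = -1 & Delta_item V i k a = 1].
  move=> k /forallPn [i /forallPn [j]]; rewrite negb_imply -ltNge => /andP[nij].
  rewrite hh_upd //.
  have := DA i j; have := d0 i j; have := d1 i j.
  case: (eqVneq k i) => [->|nki]; first by move=> *; exfalso; lia.
  case: (eqVneq k j) => [->|nkj]; last by rewrite addr0 => *; exfalso; lia.
  move=> h1 h2 h3 h4; exists i; split; first by [].
  by move: h1 h2 h3 h4; lia. by move: h1 h2 h3 h4; lia.
case: (boolP (works i0)) => [/okW //|/fail [j [nji0 Dj dj]]].
case: (boolP (works j)) => [/okW //|/fail [k [nkj Dk dk]]].
case: (boolP (works k)) => [/okW //|/fail [l [nlk Dl dl]]].
have nki0 : k != i0 by apply/eqP => e; move: dk; rewrite e hi0.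
have nli0 : l != i0 by apply/eqP => e; move: dl; rewrite e hi0.
have elj : l = j.
  apply: (@I3_third i0 j k l) => //; by rewrite eq_sym.
move: Dl; rewrite elj => Dl.
have := hyp k j; rewrite -!HH_Delta ?(eq_sym j) // Dk Dl => /(_ erefl).
by [].
Qed.
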